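(* Let $a,b$ be integers with $0<b<a$, let $S=\langle a,a+1,\ldots,a+b\rangle$ with conductor $c$, and let $m\ge 2c-1$. Let $M$ be an $(S,m,r)$-amenable set whose shadow $L_M$ is not the whole ground. Then there exists an $(S,m,r)$-amenable set $N$ whose shadow $L_N$ does not contain $m+a+b-1$ and satisfies $\sharp L_N\le\sharp L_M$.
   Context: For $x\in S$, $\mathrm D(x)=\{\alpha\in S\mid x-\alpha\in S\}$. A set $M=\{m_1<\cdots<m_r\}\subseteq S$ with $2c-1\le m=m_1$ is $(S,m,r)$-amenable if $\mathrm D(m_i)\cap[m,\infty)\subseteq M$ for all $i$. The ground is $\{m,m+1,\ldots,m+a+b-1\}$, and the shadow of $M$ is $M\cap\{m,\ldots,m+a+b-1\}$. *)

(* Defs.v *)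
From mathcomp Require Import all_boot.
Set Implicit Arguments. Unset Strict Implicit. Unset Printing Implicit Defensive.

Definition inS (a b n : nat) : Prop :=
  exists s : seq nat, all (fun g => a <= g <= a + b) s /\ sumn s = n.

Definition is_conductor (a b c : nat) : Prop :=
  (forall n, c <= n -> inS a b n) /\
  (forall c', (forall n, c' <= n -> inS a b n) -> c <= c').

(* alpha \in D(x) = { alpha in S | x - alpha in S } (integer difference, so
   alpha <= x is required since S is a subset of N). *)
Definition inD (a b x alpha : nat) : Prop :=
  inS a b alpha /\ alpha <= x /\ inS a b (x - alpha).

(* M = {m_1 < ... < m_r} subset of S, m = m_1, 2c-1 <= m, and
   D(m_i) cap [m, oo) subset M for all i. M is given as its increasing
   enumeration. *)
Definition amenable (a b c m r : nat) (M : seq nat) : Prop :=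
  sorted ltn M /\ size M = r /\ 0 < r /\ nth 0 M 0 = m /\
  (forall x, x \in M -> inS a b x) /\
  (2 * c).-1 <= m /\
  (forall x alpha, x \in M -> inD a b x alpha -> m <= alpha -> alpha \in M).

Definition ground (a b m : nat) : seq nat := iota m (a + b).

Definition shadow (a b m : nat) (M : seq nat) : seq nat :=
  [seq x <- M | x \in ground a b m].

(* Main.v *)
Require Import Defs.
From mathcomp Require Import all_boot.
From mathcomp Require Import zify.

Lemma count_splitP (T : Type) (p q : pred T) (s : seq T) :
  count p s = count (fun x => p x && q x) s + count (fun x => p x && ~~ q x) s.
Proof. elim: s => //= x s ->; case: (p x); case: (q x) => /=; lia. Qed.

Lemma take_closed {s : seq nat} {k x y : nat} :
  pairwise ltn s -> x \in take k s -> y \in s -> y <= x -> y \in take k s.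
Proof.
move=> ps xin yin yx.
have : pairwise ltn (take k s ++ drop k s) by rewrite cat_take_drop.
rewrite pairwise_cat => /andP[/allrelP H _].
have : y \in take k s ++ drop k s by rewrite cat_take_drop.
rewrite mem_cat => /orP[yd|yd]; first exact: yd.
have := H x y xin yd; lia.
Qed.

Theorem proposition4p24 (a b c m r : nat) (M : seq nat) :
  0 < b -> b < a -> is_conductor a b c -> (2 * c).-1 <= m ->
  amenable a b c m r M ->
  ~ {subset ground a b m <= shadow a b m M} ->
  exists N : seq nat, [/\ amenable a b c m r N,
    (m + a + b).-1 \notin shadow a b m N &
    size (shadow a b m N) <= size (shadow a b m M)].
Proof.
move=> b0 ba [cond _] cm [sM [szM [r0 [hM [inSM [_ clM]]]]]] nsub.
have pM : pairwise ltn M by rewrite -sorted_pairwise //; exact: ltn_trans.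
have geM : forall x, x \in M -> m <= x.
  case: M pM szM hM {sM inSM clM nsub} => [|y M'] /=; first by move=> _ sz; rewrite -sz in r0.
  move=> /andP[/allP H _] _ <- x; rewrite inE => /orP[/eqP->//|/H /ltnW //].
have uM : uniq M by apply: (pairwise_uniq (r:=ltn)) => //; exact: ltnn.
have cm' : c <= m by lia.
have : ~~ all (fun x => x \in shadow a b m M) (ground a b m).
  by apply/negP => /allP H; apply: nsub => x /H.
move/allPn => exP.
have exP' : exists i, (i \in ground a b m) && (i \notin M).
  case: exP => g g1 g2; exists g; rewrite g1 /=; apply: contra g2.
  by rewrite /shadow mem_filter g1.
have ubP : forall i, (i \in ground a b m) && (i \notin M) -> i <= m + a + b.
  by move=> i /andP[]; rewrite /ground mem_iota; lia.
case: (ex_maxnP exP' ubP) => h /andP[hg hM'] hmax.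
move: hg; rewrite /ground mem_iota => hg.
set t := (m + a + b).-1 - h.
have top : forall y, h < y < m + a + b -> y \in M.
  move=> y hy; apply/negPn/negP => yM.
  have := hmax y; rewrite /ground mem_iota yM andbT; lia.
set s := iota m t ++ map (addn t) M.
have ps : pairwise ltn s.
  rewrite pairwise_cat; apply/and3P; split.
  - apply/allrelP => x y; rewrite mem_iota => hx /mapP[z zM ->].
    have := geM z zM; lia.
  - rewrite -sorted_pairwise; [exact: iota_ltn_sorted | exact: ltn_trans].
  - rewrite pairwise_map.
    apply: sub_pairwise pM => x y /=; lia.
have sizes : size s = t + r by rewrite size_cat size_iota size_map szM.
exists (take r s); split.
- split.
    have : pairwise ltn (take r s ++ drop r s) by rewrite cat_take_drop.
    rewrite pairwise_cat => /and3P[_ H _].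
    by rewrite sorted_pairwise //; exact: ltn_trans.
  split; first by rewrite size_takel // sizes; lia.
  split => //.
  split.
    rewrite nth_take //.
    case t0: t => [|t'].
      rewrite /s t0 /= map_id_in // -hM; apply: set_nth_default; rewrite szM.
    by rewrite /s nth_cat size_iota t0.
  have ges : forall x, x \in s -> m <= x.
    move=> x; rewrite mem_cat mem_iota => /orP[|/mapP[z zM ->]]; first lia.
    have := geM z zM; lia.
  split.
    by move=> x /mem_take /ges xm; apply: cond; lia.
  split => //.
  move=> x alpha xN [alS [ax xaS]] ma.
  have xs := mem_take xN.
  apply: (take_closed ps xN _ ax); move: xs.
  rewrite mem_cat mem_iota => /orP[xi|/mapP[y yM xe]].
    by rewrite mem_cat mem_iota; apply/orP; left; lia.
  rewrite mem_cat mem_iota; case: (ltnP alpha (m + t)) => [al|al].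
    by apply/orP; left; lia.
  apply/orP; right; apply/mapP; exists (alpha - t); last lia.
  apply: (clM y) => //; last lia.
  split; first by apply: cond; lia.
  split; first lia.
  by have -> : y - (alpha - t) = x - alpha by lia.
- rewrite /shadow mem_filter negb_and; apply/orP; right.
  apply/negP => /mem_take; rewrite mem_cat mem_iota => /orP[|/mapP[z zM ze]].
    lia.
  have ez : z = h by lia.
  by rewrite -ez zM in hM'.
- rewrite /shadow !size_filter.
  apply: (leq_trans (n := count (mem (ground a b m)) s)).
    by rewrite -{2}(cat_take_drop r s) count_cat leq_addr.
  rewrite count_cat count_map.
  have -> : count (mem (ground a b m)) (iota m t) = t.
    rewrite (eq_in_count (a2 := predT)); first by rewrite count_predT size_iota.
    move=> x.
    move=> xi; rewrite /= /ground mem_iota; move: xi; rewrite mem_iota; lia.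
  rewrite [X in _ <= X](count_splitP _ _ (fun x => x < h)).
  have -> : count (preim (addn t) (mem (ground a b m))) M =
            count (fun x => (x \in ground a b m) && (x < h)) M.
    apply: eq_in_count => x xM /=; rewrite /ground !mem_iota.
    have := geM x xM; have : x != h by apply: contraNneq hM' => <-.
    lia.
  rewrite addnC leq_add2l.
  rewrite -size_filter.
  apply: (leq_trans (n := size (iota h.+1 t))); first by rewrite size_iota.
  apply: uniq_leq_size; first exact: iota_uniq.
  move=> y; rewrite mem_iota mem_filter /ground mem_iota => hy.
  rewrite top; last lia.
  apply/andP; split; lia.
Qed.
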